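(* For any formal series $\hat\psi(\hbar^2,y)$, $\hat y(\hbar^2,z)$ with $\hat\psi(\hbar^2,0)=\hat y(\hbar^2,0)=0$, and all $g\ge0$, $n\ge1$, $$2!\,[\hbar^{2g-2+n}u^2]\,\mathcal{T}_n(z_1;z_2,\dots,z_n;u)=W_{g-1,n+1}(z_1,z_1,z_2,\dots,z_n)+\sum_{\substack{g_1+g_2=g\\ I\sqcup J=\{2,\dots,n\}}}W_{g_1,|I|+1}(z_1,z_I)W_{g_2,|J|+1}(z_1,z_J),$$ where a factor $W_{0,2}$ with two equal arguments is replaced by $D_1D_2H_{0,2}$ on the diagonal.
   Context: $Z_{\hat\psi,\hat y}=\sum_\lambda s_\lambda(p)s_\lambda(\hat y_1/\hbar,\hat y_2/\hbar,\dots)\exp(\sum_{(i,j)\in\lambda}\hat\psi(\hbar^2,\hbar(i-j)))$, $\hat y=\sum\hat y_iz^i$, Schur functions in power sums; $H_{g,n}=\sum_{k_i\ge1}([\hbar^{2g-2+n}]\partial^n\log Z/\partial p_{k_1}\cdots\partial p_{k_n}|_{p=0})\prod X_i^{k_i}$; $\psi=\hat\psi(0,\cdot)$, $y=\hat y(0,\cdot)$, $X(z)=ze^{-\psi(y(z))}$ (formal change of variables at $0$), $Q=1-zy'\psi'(y)$, $D_i=X_i\partial_{X_i}=Q(z_i)^{-1}z_i\partial_{z_i}$; $W_{g,n}=D_1\cdots D_nH_{g,n}$ for $(g,n)\ne(0,2)$, $W_{0,2}=D_1D_2H_{0,2}+X_1X_2/(X_1-X_2)^2$, $W$ with negative genus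 is $0$; $W_n=\sum_g\hbar^{2g-2+n}W_{g,n}$; $\mathcal{S}(u)=(e^{u/2}-e^{-u/2})/u$. $T_n(z_1;z_2,\dots,z_n;u)=\sum_{k\ge1}\frac1{k!}\big(\prod_{i=1}^k|_{z_{\bar i}=z_1}u\hbar\mathcal{S}(u\hbar D_{\bar i})\big)W_{k+n-1}(z_{\bar1},\dots,z_{\bar k},z_2,\dots,z_n)$ (operators applied in auxiliary variables $z_{\bar i}$, then $z_{\bar i}=z_1$; any $W_{0,2}$ factor with two barred arguments is replaced by $DDH_{0,2}$), and $\mathcal{T}_n=\frac{\mathcal{S}(u\hbar D_1)}{\hbar\mathcal{S}(u\hbar)}\sum_{l\ge1}\frac1{l!}\sum_{J_1\sqcup\dots\sqcup J_l=\{2,\dots,n\}}\prod_{i=1}^lT_{|J_i|+1}(z_1;z_{J_i};u)$ (ordered decompositions, parts possibly empty). *)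

(* Defs.v *)
(* Formal-series framework for Lemma 2.18.
   All formal series are represented by their coefficient functions; every
   product is the Cauchy product, written as the finite sum it reduces to. *)
From HB Require Import structures.
From mathcomp Require Import all_boot all_order all_fingroup all_algebra.
Set Implicit Arguments. Unset Strict Implicit. Unset Printing Implicit Defensive.
Import Order.TTheory GRing.Theory Num.Theory.
Local Open Scope ring_scope.

Fixpoint box (s : seq nat) : seq (seq nat) :=
  if s is a :: s' then [seq i :: t | i <- iota 0 a.+1, t <- box s'] else [:: [::]].
Fixpoint comps (l t : nat) : seq (seq nat) :=
  if l is l'.+1 then [seq i :: c | i <- iota 0 t.+1, c <- comps l' (t - i)]
  else if t == 0%N then [:: [::]] else [::].
Fixpoint tuples (l len : nat) : seq (seq nat) :=
  if len is len'.+1 then [seq i :: t | i <- iota 0 l, t <- tuples l len'] else [:: [::]].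
Definition bitseqs (len : nat) : seq bitseq :=
  [seq [seq i == 1%N | i <- t] | t <- tuples 2 len].
Definition icc (lo hi : int) : seq int :=
  if hi < lo then [::] else [seq lo + (i%:Z) | i <- iota 0 (absz (hi - lo)).+1].
Fixpoint partsb (fuel b d : nat) : seq (seq nat) :=
  if d == 0%N then [:: [::]] else
  if fuel is fuel'.+1 then
    flatten [seq [seq p :: l | l <- partsb fuel' p (d - p)] | p <- iota 1 (minn b d)]
  else [::].
Definition partitions (d : nat) : seq (seq nat) := partsb d d d.
Definition vsub (a b : seq nat) : seq nat := [seq (p.1 - p.2)%N | p <- zip a b].
Definition nonzerov (nu : seq nat) : bool := has (fun a => a != 0%N) nu.
Definition sumz (s : seq int) : int := foldr +%R 0 s.

Section Defs.
Variable K : fieldType.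

(* Univariate formal power series  f : nat -> K  (f r = [t^r] f)        *)
Definition smul (f g : nat -> K) (r : nat) : K := \sum_(i < r.+1) f i * g (r - i)%N.
Fixpoint spow (f : nat -> K) (m : nat) : nat -> K :=
  if m is m'.+1 then smul f (spow f m') else (fun r => (r == 0%N)%:R).
(* exp f, for f with zero constant term *)
Definition sexp (f : nat -> K) (r : nat) : K :=
  \sum_(m < r.+1) (m`!%:R)^-1 * spow f m r.

(* Polynomials in the power sums p_1,...,p_D: a monomial p^nu is given by
   its multiplicity vector nu (nu_j = multiplicity of p_{j+1}).          *)
Definition weight (nu : seq nat) : nat := \sum_(j < size nu) (j.+1 * nth 0%N nu j)%N.
Definition cnt (nu : seq nat) : nat := sumn nu.
Definition zee (nu : seq nat) : K :=
  (\prod_(j < size nu) (j.+1 ^ nth 0%N nu j * (nth 0%N nu j)`!))%N%:R.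
(* complete homogeneous h_r = sum_{|nu|=r} p_nu / z_nu, coefficient of p^nu *)
Definition hc (r : int) (nu : seq nat) : K :=
  if (weight nu)%:Z == r then (zee nu)^-1 else 0.
Fixpoint pprod (fs : seq (seq nat -> K)) (nu : seq nat) : K :=
  if fs is f :: fs' then \sum_(nu1 <- box nu) f nu1 * pprod fs' (vsub nu nu1)
  else (~~ nonzerov nu)%:R.
(* [p^nu] s_la, with s_la = det (h_{la_i - i + j}) (Jacobi--Trudi) *)
Definition schur_coef (la nu : seq nat) : K :=
  \sum_(s : 'S_(size la)) (-1) ^+ s *
    pprod [seq hc ((nth 0%N la (nat_of_ord i))%:Z - (nat_of_ord i)%:Z + (nat_of_ord (s i))%:Z) | i <- enum 'I_(size la)] nu.

Variables psihat yhat : nat -> nat -> K.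
(* psihat a b = [hbar^(2a) y^b] \hat psi ,  yhat a j = [hbar^(2a) z^j] \hat y *)

(* \hat y_j as a power series in hbar *)
Definition yh (j r : nat) : K := if odd r then 0 else yhat r./2 j.
Definition Ypow (nu : seq nat) : nat -> K :=
  foldr (fun j acc => smul (spow (yh j.+1) (nth 0%N nu j)) acc)
        (fun r => (r == 0%N)%:R) (iota 0 (size nu)).
(* [hbar^r] \hat psi(hbar^2, hbar c) *)
Definition psi_at (c : int) (r : nat) : K :=
  \sum_(b < r.+1) (if odd (r - b) then 0 else psihat ((r - b)./2)%N b * c%:~R ^+ b).
(* exp (sum_{(i,j) in la} \hat psi(hbar^2, hbar (i - j))) as a power series in hbar;
   (i,j) = (row, column), both starting at 1 *)
Definition Ela (la : seq nat) : nat -> K :=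
  sexp (fun r => \sum_(i < size la) \sum_(j < nth 0%N la i)
                   psi_at ((i.+1)%:Z - (j.+1)%:Z) r).

Definition vecs (D d : nat) : seq (seq nat) := [seq nu <- box (nseq D d) | weight nu == d].
(* [hbar^e p^mu] Z ;  valuation in hbar is >= - weight mu *)
Definition Zc (mu : seq nat) (e : int) : K :=
  let d := weight mu in
  \sum_(la <- partitions d) \sum_(nu <- vecs (size mu) d)
    schur_coef la mu * schur_coef la nu *
    (let r := e + (cnt nu)%:Z in if r < 0 then 0 else smul (Ypow nu) (Ela la) (absz r)).
Definition Zm1 (nu : seq nat) (e : int) : K := if nonzerov nu then Zc nu e else 0.

(* product of two Laurent series in hbar with valuations >= v1, v2 *)
Definition lmulb (v1 v2 : int) (f g : int -> K) (e : int) : K :=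
  let t := e - v1 - v2 in
  if t < 0 then 0 else
  \sum_(i < (absz t).+1) f (v1 + i%:Z) * g (v2 + ((absz t - i)%N)%:Z).
(* [hbar^e p^mu] (Z - 1)^m *)
Fixpoint Pc (m : nat) (mu : seq nat) (e : int) : K :=
  if m is m'.+1 then
    \sum_(nu <- box mu) lmulb (- (weight nu)%:Z) (- (weight (vsub mu nu))%:Z)
                              (Zm1 nu) (Pc m' (vsub mu nu)) e
  else if ~~ nonzerov mu && (e == 0) then 1 else 0.
(* [hbar^e p^mu] log Z = sum_{m>=1} (-1)^(m-1)/m (Z-1)^m ; terms m > cnt mu vanish *)
Definition logZc (mu : seq nat) (e : int) : K :=
  \sum_(1 <= m < (cnt mu).+1) ((-1) ^+ m.-1 / m%:R * Pc m mu e).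
(* [X_1^{k_1}...X_N^{k_N}] H_{g,N}
   = [hbar^{2g-2+N}] d^N log Z / dp_{k_1}...dp_{k_N} |_{p=0} *)
Definition Hc (g N : nat) (k : seq nat) : K :=
  let D := sumn k in
  let mu := [seq count_mem j.+1 k | j <- iota 0 D] in
  (\prod_(j <- mu) j`!)%N%:R * logZc mu ((2 * g)%:Z - 2 + N%:Z).

(* Series in X_1,...,X_n (exponent vector x : seq int of length n) with
   support in the cone  x_2,...,x_n >= 0,  x_1 >= -(x_2+...+x_n);
   rational functions with poles only at X_1 = X_j are expanded in the
   region |X_j| < |X_1|.                                                  *)
Definition incone (x : seq int) : bool :=
  all (fun a => 0 <= a) (behead x) && (- sumz (behead x) <= head 0 x).
Definition cunit (x : seq int) : K := (all (fun a => a == 0) x)%:R.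
Definition cmul (f g : seq int -> K) (x : seq int) : K :=
  if incone x then
    \sum_(b' <- box (map absz (behead x)))
      \sum_(b0 <- icc (- sumz (map Posz b')) (head 0 x + sumz (behead x) - sumz (map Posz b')))
        f (b0 :: map Posz b') *
        g ((head 0 x - b0) :: [seq p.1 - p.2 | p <- zip (behead x) (map Posz b')])
  else 0.
Definition cprod (fs : seq (seq int -> K)) : seq int -> K := foldr cmul cunit fs.

(* W_{g,N} = D_1...D_N H_{g,N} in the X-coordinates (D_i = X_i d/dX_i) *)
Definition Wreg (g N : nat) (x : seq int) : K :=
  if (size x == N) && all (fun a => 0 < a) x
  then Hc g N (map absz x) * \prod_(a <- x) a%:~R else 0.
(* X_1 X_2/(X_1 - X_2)^2 = sum_{k>=1} k X_2^k X_1^{-k} *)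
Definition Wsing (x : seq int) : K :=
  match x with [:: a; b] => if (0 < b) && (a == - b) then b%:~R else 0 | _ => 0 end.
Definition Wfull (g N : nat) (x : seq int) : K :=
  Wreg g N x + (if (g == 0%N) && (N == 2%N) then Wsing x else 0).
Definition genus_of (b : int) (N : nat) : option nat :=
  let t := b + 2 - N%:Z in
  if (0 <= t) && ~~ odd (absz t) then Some (absz t)./2 else None.

(* S(x) = sum_r sc r x^(2r) ; 1/S(x) = sum_t sinv t x^(2t) *)
Definition sc (r : nat) : K := ((2 ^ (2 * r) * (2 * r).+1`!)%N%:R)^-1.
Fixpoint sinv_list (t : nat) : seq K :=
  if t is t'.+1 then
    let l := sinv_list t' in rcons l (- \sum_(r <- iota 1 t) sc r * nth 0 l (t - r))
  else [:: 1].
Definition sinv (t : nat) : K := nth 0 (sinv_list t) t.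

(* r-tuples (r_1..r_k) with sum (2 r_i + 1) = m *)
Definition rtuples (k m : nat) : seq (seq nat) :=
  if (k <= m)%N && ~~ odd (m - k) then comps k (m - k)./2 else [::].
(* J : bitseq of length n-1 selecting a subset of {z_2,...,z_n} *)
Definition zero_outside (J : bitseq) (x : seq int) : bool :=
  all (fun p => p.1 || (p.2 == 0)) (zip J (behead x)).

(* [u^m hbar^a X^x] T_{|J|+1}(z_1; z_J; u), viewed in the n variables *)
Definition Tc (m : nat) (a : int) (J : bitseq) (x : seq int) : K :=
  if ~~ zero_outside J x then 0 else
  let xJ := mask J (behead x) in
  let x0 := head 0 x in
  let NJ := count id J in
  \sum_(k <- iota 1 m) (k`!%:R)^-1 *
    \sum_(r <- rtuples k m) (\prod_(ri <- r) sc ri) *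
      (let N := (k + NJ)%N in
       match genus_of (a - m%:Z) N with
       | None => 0
       | Some g =>
         if k == 1%N then x0%:~R ^+ (2 * head 0%N r) * Wfull g N (x0 :: xJ)
         else if x0 < 0 then 0 else
         \sum_(bs <- comps k (absz x0))
            (\prod_(p <- zip bs r) (p.1%:R ^+ (2 * p.2))) * Wreg g N (map Posz bs ++ xJ)
       end).

Definition blockmask (f : seq nat) (i : nat) : bitseq := [seq j == i | j <- f].
(* [u^m hbar^a X^x] sum_{l>=1} 1/l! sum_{J_1 u...u J_l} prod_i T(z_1;z_{J_i};u);
   each T is O(u) and has hbar-valuation >= -1 *)
Definition Gc (n m : nat) (a : int) (x : seq int) : K :=
  \sum_(l <- iota 1 m) (l`!%:R)^-1 *
    \sum_(f <- tuples l n.-1) \sum_(ms <- comps l m)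
      (if a + l%:Z < 0 then 0 else
       \sum_(ts <- comps l (absz (a + l%:Z)))
         cprod [seq Tc (nth 0%N ms i) ((nth 0%N ts i)%:Z - 1) (blockmask f i) | i <- iota 0 l] x).
(* [u^m hbar^a X^x] \mathcal T_n *)
Definition TTc (n m : nat) (a : int) (x : seq int) : K :=
  \sum_(r < m.+1) \sum_(t < m.+1)
    (if (2 * r + 2 * t <= m)%N then
       sc r * sinv t * (head 0 x)%:~R ^+ (2 * r) *
       Gc n (m - 2 * r - 2 * t) (a + 1 - (2 * r + 2 * t)%N%:Z) x
     else 0).

Definition Wemb (g : nat) (I : bitseq) (x : seq int) : K :=
  if zero_outside I x then Wfull g (count id I).+1 (head 0 x :: mask I (behead x)) else 0.
Definition RHSc (g n : nat) (x : seq int) : K :=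
  (if g is g'.+1 then
     (if head 0 x < 0 then 0 else
      \sum_(bs <- comps 2 (absz (head 0 x))) Wreg g' n.+1 (map Posz bs ++ behead x))
   else 0)
  + \sum_(g1 < g.+1) \sum_(I <- bitseqs n.-1) cmul (Wemb g1 I) (Wemb (g - g1) (map negb I)) x.

(* change of variables X_i = X(z_i),  X(z) = z exp(-psi(y(z)))          *)
Definition phi_ser (r : nat) : K := \sum_(b < r.+1) psihat 0 b * spow (yhat 0) b r.
(* [z^r] (X(z)/z)^e *)
Definition ecoef (e : int) (r : int) : K :=
  if r < 0 then 0 else sexp (fun s => - e%:~R * phi_ser s) (absz r).
Definition Phi (F : seq int -> K) (w : seq int) : K :=
  if incone w then
    \sum_(x' <- box (map absz (behead w)))
      \sum_(x0 <- icc (- sumz (map Posz x')) (head 0 w))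
        F (x0 :: map Posz x') * ecoef x0 (head 0 w - x0) *
        \prod_(p <- zip (behead w) x') ecoef (Posz p.2) (p.1 - Posz p.2)
  else 0.

End Defs.

(* Main.v *)
Require Import Defs.
From HB Require Import structures.
From mathcomp Require Import all_boot all_order all_fingroup all_algebra.
From mathcomp Require Import zify.
Import Order.TTheory GRing.Theory Num.Theory.
Local Open Scope ring_scope.
Set Implicit Arguments. Unset Strict Implicit.
Section S.
Variable K : fieldType.
Variables psihat yhat : nat -> nat -> K.


Lemma sc0 : sc K 0 = 1.
Proof. by rewrite /sc invr1. Qed.

Lemma Tc0 a J y : Tc psihat yhat 0 a J y = 0.
Proof. by rewrite /Tc big_nil if_same. Qed.

Lemma Tc1 a J y : Tc psihat yhat 1 a J y =
  if zero_outside J y then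
    match genus_of (a - (1%N)%:Z) (1 + count id J) with
    | Some g => Wfull psihat yhat g (1 + count id J) (head 0 y :: mask J (behead y))
    | None => 0 end
  else 0.
Proof.
rewrite /Tc; case: (zero_outside J y) => //.
rewrite big_seq1 /rtuples /= big_seq1 big_seq1 invr1 mul1r /sc /= invr1 mul1r.
by case: genus_of => // g; rewrite expr0 mul1r.
Qed.

Lemma Tc2 a J y : Tc psihat yhat 2 a J y =
  if zero_outside J y then (2%:R)^-1 *
    match genus_of (a - (2%N)%:Z) (2 + count id J) with
    | Some g => if head 0 y < 0 then 0 else
        \sum_(bs <- comps 2 (absz (head 0 y)))
           Wreg psihat yhat g (2 + count id J) (map Posz bs ++ mask J (behead y))
    | None => 0 end
  else 0.
Proof.
rewrite /Tc; case: (zero_outside J y) => //.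
rewrite big_cons big_seq1.
have -> : rtuples 1 2 = [::] by [].
have -> : rtuples 2 2 = [:: [:: 0%N; 0%N]] by [].
rewrite big_nil mulr0 add0r big_seq1 big_cons big_seq1 sc0 mulr1 mul1r.
have -> : (2`!)%:R = 2%:R :> K by [].
case: genus_of => // g; case: ifP => // _.
apply: congr2 => //; apply: eq_bigr => bs _.
rewrite (_ : \prod_(p <- zip bs [:: 0%N; 0%N]) _ = 1) ?mul1r //.
case: bs => [|b1 [|b2 bs]] /=; rewrite ?big_nil ?big_cons ?big_nil /= ?muln0 ?expr0 ?mulr1 //.
by case: bs => [|? ?]; rewrite big_nil !mul1r.
Qed.

Lemma comps_S l t : comps l.+1 t = [seq i :: c | i <- iota 0 t.+1, c <- comps l (t - i)].
Proof. by []. Qed.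

Lemma sum_comps1 (F : seq nat -> K) t : \sum_(c <- comps 1 t) F c = F [:: t].
Proof.
rewrite comps_S big_allpairs_dep.
rewrite (_ : iota 0 t.+1 = index_iota 0 t.+1) // big_nat_recr //= subnn eqxx big_seq1.
rewrite big_nat big1 ?add0r // => i /andP[_ it].
by rewrite (_ : (t - i == 0)%N = false) ?big_nil //; apply/negbTE; rewrite subn_eq0 -ltnNge.
Qed.

Lemma sum_comps2 (F : seq nat -> K) t : \sum_(c <- comps 2 t) F c = \sum_(i < t.+1) F [:: (i : nat); (t - i)%N].
Proof.
rewrite comps_S big_allpairs_dep.
rewrite (_ : iota 0 t.+1 = index_iota 0 t.+1) // big_mkord.
by apply: eq_bigr => i _; rewrite sum_comps1.
Qed.

Lemma sum_pick (T : eqType) (r : seq T) (x : T) (G : T -> K) :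
  uniq r -> x \in r -> \sum_(i <- r) (if i == x then G i else 0) = G x.
Proof.
elim: r => // a r IH /= /andP[ar ur]; rewrite in_cons big_cons.
case: (eqVneq a x) => [<-|ax] /= => [_|xr].
  rewrite big1_seq ?addr0 // => i /andP[_ ir].
  by case: (eqVneq i a) => // eia; rewrite eia (negbTE ar) in ir.
by rewrite add0r; apply: IH.
Qed.

Lemma box_S a s : box (a :: s) = [seq i :: t | i <- iota 0 a.+1, t <- box s].
Proof. by []. Qed.

Lemma sum_box_pick (s : seq nat) (G : seq nat -> K) :
  \sum_(t <- box s) (if t == s then G t else 0) = G s.
Proof.
elim: s G => [|a s IH] G; first by rewrite /= big_seq1 eqxx.
rewrite box_S big_allpairs_dep.
rewrite (eq_bigr (fun i => if i == a then G (a :: s) else 0)).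
  by rewrite (@sum_pick _ _ a (fun _ => G (a :: s))) ?iota_uniq ?mem_iota ?add0n ?leq0n ?ltnSn.
move=> i _; case: (eqVneq i a) => [->|ia].
  by rewrite -(IH (fun t => G (a :: t))); apply: eq_bigr => t _; rewrite eqseq_cons eqxx.
by rewrite big1 // => t _; rewrite eqseq_cons (negbTE ia).
Qed.

Lemma box_mem s t : t \in box s -> all2 (fun a b => (a <= b)%N) t s.
Proof.
elim: s t => [|a s IH] t; first by rewrite /= inE => /eqP ->.
rewrite box_S => /allpairsPdep [i [u [ii uu ->]]] /=.
by rewrite IH // andbT; move: ii; rewrite mem_iota.
Qed.

Lemma all2_size s t : all2 (fun a b => (a <= b)%N) t s -> size t = size s.
Proof. by elim: s t => [|a s IH] [|b t] //= /andP[_ /IH ->]. Qed.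

Lemma icc_mem lo hi x : (x \in icc lo hi) = (lo <= x <= hi).
Proof.
rewrite /icc; case: ltP => h.
  by rewrite in_nil; apply/esym/negbTE; apply/negP => /andP[]; lia.
apply/mapP/idP => [[i]|/andP[h1 h2]].
  by rewrite mem_iota => /andP[_ hi'] ->; apply/andP; split; lia.
exists (absz (x - lo)); last by lia.
by rewrite mem_iota; apply/andP; split; lia.
Qed.

Lemma icc_uniq lo hi : uniq (icc lo hi).
Proof.
rewrite /icc; case: ifP => // _.
rewrite map_inj_uniq ?iota_uniq // => i j /addrI /eqP.
by rewrite eqz_nat => /eqP.
Qed.

Lemma zipdiff0 s b : size b = size s ->
  all (fun a => a == 0) [seq p.1 - p.2 | p <- zip (map Posz s) (map Posz b)] = (b == s).
Proof.
elim: s b => [|a s IH] [|c b] //= [/IH ->].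
by rewrite subr_eq0 eqz_nat eqseq_cons eq_sym.
Qed.

Lemma cmul_unit (f : seq int -> K) y0 y' : incone (y0 :: y') ->
  cmul f (cunit K) (y0 :: y') = f (y0 :: y').
Proof.
move=> hy; rewrite /cmul hy /=.
move: hy; rewrite /incone /= => /andP[hpos hsum].
have [s ys] : exists s, y' = map Posz s.
  exists (map absz y'); rewrite -map_comp; elim: y' hpos {hsum} => //= a y' IH /andP[ha hy'].
  by rewrite -IH //; congr (_ :: _); lia.
subst y'.
have -> : map absz (map Posz s) = s by elim: s {hpos hsum} => //= a s ->.
rewrite (eq_big_seq (fun b' => if b' == s then
   \sum_(b0 <- icc (- sumz (map Posz b')) (y0 + sumz (map Posz s) - sumz (map Posz b')))
     (if b0 == y0 then f (b0 :: map Posz b') else 0) else 0)).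
  rewrite sum_box_pick addrK sum_pick ?icc_uniq // icc_mem lexx andbT.
  exact: hsum.
move=> b' /box_mem /all2_size hb; rewrite /cunit.
case: (eqVneq b' s) => [->|bs].
  apply: eq_bigr => b0 _ /=; rewrite zipdiff0 // eqxx andbT subr_eq0 eq_sym.
  by case: eqP => _; rewrite ?mulr1 ?mulr0.
by rewrite big1 // => b0 _ /=; rewrite zipdiff0 // (negbTE bs) andbF mulr0.
Qed.

Lemma zipdiff_props x' b' : all (fun a => 0 <= a) x' -> all2 (fun a b => (a <= b)%N) b' (map absz x') ->
  all (fun a => 0 <= a) [seq p.1 - p.2 | p <- zip x' (map Posz b')] &&
  (sumz [seq p.1 - p.2 | p <- zip x' (map Posz b')] == sumz x' - sumz (map Posz b')).
Proof.
elim: x' b' => [|a x' IH] [|c b'] //=.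
move=> /andP[ha hx] /andP[hc hb]; have /andP[h1 /eqP h2] := IH b' hx hb.
rewrite h1 h2 andbT; apply/andP; split; first by lia.
by apply/eqP; lia.
Qed.

Lemma cmul_in (f g1 g2 : seq int -> K) x :
  (forall y0 y', incone (y0 :: y') -> g1 (y0 :: y') = g2 (y0 :: y')) ->
  cmul f g1 x = cmul f g2 x.
Proof.
move=> H; rewrite /cmul; case: ifP => // hx.
apply: eq_big_seq => b' /box_mem hb'; apply: eq_big_seq => b0; rewrite icc_mem => /andP[h1 h2].
congr (_ * _); apply: H.
move: hx; rewrite /incone /= => /andP[hpos hsum].
have /andP[-> /eqP ->] := zipdiff_props hpos hb'.
move: h2; rewrite /=; generalize (head 0 x) (sumz (behead x)) (sumz [seq Posz i | i <- b']) b0 => a sx sb c; lia.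
Qed.

Lemma cmul_inner (f g : seq int -> K) x :
  cmul f (cmul g (cunit K)) x = cmul f g x.
Proof. by apply: cmul_in => y0 y' hy; rewrite cmul_unit. Qed.

Lemma genus_of_some b N g : b + 2 - N%:Z = (2 * g)%N%:Z -> genus_of b N = Some g.
Proof.
rewrite /genus_of => ->; rewrite /= oddM /= mul2n doubleK.
by [].
Qed.

Lemma genus_of_inv b N g : genus_of b N = Some g -> b + 2 - N%:Z = (2 * g)%N%:Z.
Proof.
rewrite /genus_of; case: ifP => // /andP[h1 h2] [<-].
have := odd_double_half (absz (b + 2 - N%:Z)%R); rewrite (negbTE h2) add0n -mul2n => ->.
by lia.
Qed.

Lemma cmul_zero_l (f g : seq int -> K) x : (forall y, f y = 0) -> cmul f g x = 0.
Proof.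
move=> H; rewrite /cmul; case: ifP => // _.
by rewrite big1 // => b' _; rewrite big1 // => b0 _; rewrite H mul0r.
Qed.

Lemma cmul_zero_r (f g : seq int -> K) x : (forall y, g y = 0) -> cmul f g x = 0.
Proof.
move=> H; rewrite /cmul; case: ifP => // _.
by rewrite big1 // => b' _; rewrite big1 // => b0 _; rewrite H mulr0.
Qed.

Lemma tuples1 len : tuples 1 len = [:: nseq len 0%N].
Proof. by elim: len => //= len ->. Qed.

Lemma tuples_S l len : tuples l len.+1 = [seq i :: t | i <- iota 0 l, t <- tuples l len].
Proof. by []. Qed.

Lemma tuples_size l len t : t \in tuples l len -> size t = len.
Proof.
elim: len t => [|len IH] t; first by rewrite inE => /eqP ->.
by rewrite tuples_S => /allpairsPdep [i [u [_ /IH <- ->]]].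
Qed.

Lemma bitseqs_size len I : I \in bitseqs len -> size I = len.
Proof. by move=> /mapP [t /tuples_size <- ->]; rewrite size_map. Qed.

Lemma tuples_bitseqs len (F : bitseq -> bitseq -> K) :
  \sum_(t <- tuples 2 len) F [seq j == 0%N | j <- t] [seq j == 1%N | j <- t] =
  \sum_(I <- bitseqs len) F I (map negb I).
Proof.
rewrite /bitseqs big_map.
elim: len F => [|len IH] F; first by rewrite !big_seq1.
rewrite tuples_S !big_allpairs_dep /= !big_cons !big_nil !addr0 /=.
rewrite (IH (fun I J => F (true :: I) (false :: J))).
rewrite (IH (fun I J => F (false :: I) (true :: J))).
rewrite addrC; congr (_ + _); apply: eq_bigr => t _; rewrite -map_comp //.
Qed.

Lemma reindex_sparse (F : nat -> K) (h : nat -> nat) S m :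
  (forall j1 j2, (j1 < m)%N -> (j2 < m)%N -> h j1 = h j2 -> j1 = j2) ->
  (forall j, (j < m)%N -> (h j < S)%N) ->
  (forall i, (i < S)%N -> F i != 0 -> exists2 j, (j < m)%N & i = h j) ->
  \sum_(i < S) F i = \sum_(j < m) F (h j).
Proof.
move=> H1 H2 H3.
transitivity (\sum_(i < S) \sum_(j < m) (if (i : nat) == h j then F i else 0)).
  apply: eq_bigr => i _; case: (eqVneq (F i) 0) => [->|nz].
    by rewrite big1 // => j _; case: ifP.
  have [j jm ->] := H3 i (ltn_ord i) nz.
  rewrite (bigD1 (Ordinal jm)) //= eqxx big1 ?addr0 // => j' /negbTE nj.
  case: eqP => // e; move: nj; rewrite -val_eqE /= (H1 _ _ jm (ltn_ord j') e).
  by rewrite eqxx.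
rewrite exchange_big; apply: eq_bigr => j _.
rewrite (bigD1 (Ordinal (H2 j (ltn_ord j)))) //= eqxx big1 ?addr0 // => i /negbTE ni.
by case: eqP => // e; move: ni; rewrite -val_eqE /= e eqxx.
Qed.

Lemma cmul_ext (f1 f2 g1 g2 : seq int -> K) x : f1 =1 f2 -> g1 =1 g2 ->
  cmul f1 g1 x = cmul f2 g2 x.
Proof.
move=> E1 E2; rewrite /cmul; case: ifP => // _.
by apply: eq_bigr => b' _; apply: eq_bigr => b0 _; rewrite E1 E2.
Qed.

Lemma Phi_ext (F G : seq int -> K) w : (0 < size w)%N ->
  (forall x, size x = size w -> incone x -> F x = G x) -> Phi psihat yhat F w = Phi psihat yhat G w.
Proof.
move=> hw H; rewrite /Phi; case: ifP => // _.
apply: eq_big_seq => x' /box_mem /all2_size hs; apply: eq_big_seq => x0.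
rewrite icc_mem => /andP[h1 h2]; rewrite H //=.
  by rewrite size_map hs size_map size_behead prednK.
rewrite /incone /= h1 andbT; by apply/allP => a /mapP [? _ ->].
Qed.
End S.
Section S.
Variable K : fieldType.
Variables psihat yhat : nat -> nat -> K.

Lemma sum_l2 g n I x : size I = n.-1 -> (1 <= n)%N ->
  \sum_(i < (2*g + 1 + n).+1)
     cmul (Tc psihat yhat 1 ((i:nat)%:Z - 1) I)
          (Tc psihat yhat 1 (((2*g+1+n) - i)%N%:Z - 1) (map negb I)) x
  = \sum_(g1 < g.+1) cmul (Wemb psihat yhat g1 I) (Wemb psihat yhat (g - g1) (map negb I)) x.
Proof.
move=> hI hn.
set N0 := count id I; set N1 := count id (map negb I).
have hN : (N0 + N1)%N = n.-1.
  by rewrite /N0 /N1 count_map -hI -(count_predC id I).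
pose F := fun i : nat => cmul (Tc psihat yhat 1 (i%:Z - 1) I)
          (Tc psihat yhat 1 (((2*g+1+n) - i)%N%:Z - 1) (map negb I)) x.
pose h := fun j : nat => (2 * j + 1 + N0)%N.
transitivity (\sum_(j < g.+1) F (h j)).
  apply: (@reindex_sparse _ F h).
  - by move=> j1 j2 _ _; rewrite /h; lia.
  - by move=> j jg; rewrite /h; lia.
  move=> i hi; rewrite /F.
  case E0: (genus_of (i%:Z - 1 - (1%N)%:Z) (1 + N0)) => [g0|]; last first.
    by rewrite cmul_zero_l ?eqxx // => y; rewrite Tc1 E0; case: ifP.
  case E1: (genus_of (((2*g+1+n) - i)%N%:Z - 1 - (1%N)%:Z) (1 + N1)) => [g1|]; last first.
    by rewrite cmul_zero_r ?eqxx // => y; rewrite Tc1 E1; case: ifP.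
  move=> _; exists g0; move/genus_of_inv: E0 => E0; move/genus_of_inv: E1 => E1.
    by rewrite /h; lia.
  by rewrite /h; lia.
apply: eq_bigr => j _; rewrite /F /h; apply: cmul_ext => y.
  rewrite Tc1 (@genus_of_some _ _ j); last by lia.
  by rewrite /Wemb add1n.
rewrite Tc1 (@genus_of_some _ _ (g - j)); last by have := ltn_ord j; lia.
by rewrite /Wemb add1n.
Qed.
End S.
Section S.
Variable K : fieldType.
Variables psihat yhat : nat -> nat -> K.

Lemma Gc0 n a x : Gc psihat yhat n 0 a x = 0.
Proof. by rewrite /Gc big_nil. Qed.

Lemma TTc2 n a x : TTc psihat yhat n 2 a x = Gc psihat yhat n 2 (a + 1) x.
Proof.
rewrite /TTc !big_ord_recl !big_ord0 /bump /=.
rewrite !Gc0 !mulr0 !addr0 /sc /sinv /= !muln1 !expr0 !invr1 !mulr1 !mul1r.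
by [].
Qed.

Lemma abszE' (z : int) (m : nat) : z = m%:Z -> absz z = m.
Proof. by move=> ->. Qed.

Lemma zero_outside_true k y : zero_outside (nseq k true) y.
Proof. rewrite /zero_outside; move: (behead y); elim: k => [|k IH] [|a s] //=. Qed.

Lemma cntnseq k : count id (nseq k true) = k.
Proof. by elim: k => //= k ->. Qed.

Lemma cntnseq' k : count (fun x : bool => x) (nseq k true) = k.
Proof. by elim: k => //= k ->. Qed.

Lemma main_pt g n x : (1 <= n)%N -> size x = n -> incone x ->
  Gc psihat yhat n 2 ((2 * g)%:Z - 2 + n%:Z + 1) x = 
  (2%:R)^-1 * RHSc psihat yhat g n x.
Proof.
move=> hn hx hinc.
case: x hx hinc => [|x0 x'] hx hinc; first by move: hn; rewrite -hx.
move: hx => [hx].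
rewrite /Gc big_cons big_seq1 tuples1 big_seq1 /RHSc mulrDr.
congr (_ + _).
  have -> : comps 1 2 = [:: [:: 2%N]] by [].
  rewrite big_seq1 ifF; last by lia.
  rewrite (@abszE' _ (2*g + n)%N); last by lia.
  rewrite sum_comps1 [LHS]/=.
  rewrite cmul_unit // Tc2 /blockmask map_nseq eqxx zero_outside_true.
  rewrite (_ : behead (x0 :: x') = x') // (_ : head 0 (x0::x') = x0) // cntnseq.
  rewrite mask_true; last by rewrite -hx.
  rewrite (_ : (2 + n.-1 = n.+1)%N); last by lia.
  rewrite (_ : 1`!%:R = 1 :> K) // invr1 mul1r.
  case: g => [|g'].
    by case E: genus_of => [g0|] //; move/genus_of_inv: E; lia.
  by rewrite (@genus_of_some _ _ g') //; lia.
have -> : comps 2 2 = [:: [:: 0%N; 2%N]; [:: 1%N; 1%N]; [:: 2%N; 0%N]] by [].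
rewrite (_ : 2`!%:R = 2%:R :> K) //; congr (_ * _).
set S := (2 * g + 1 + n)%N.
rewrite (eq_bigr (fun f => \sum_(i < S.+1) cmul (Tc psihat yhat 1 ((i:nat)%:Z - 1) [seq j == 0%N | j <- f])
   (Tc psihat yhat 1 ((S - i)%N%:Z - 1) [seq j == 1%N | j <- f]) (x0::x'))); last first.
  move=> f _; rewrite !big_cons big_nil addr0.
  rewrite (_ : ((2 * g)%:Z - 2 + n%:Z + 1 + (2%N)%:Z < 0) = false); last by lia.
  rewrite (_ : absz ((2 * g)%:Z - 2 + n%:Z + 1 + (2%N)%:Z) = S); last by rewrite /S; lia.
  rewrite big1 ?add0r; last first.
    move=> ts _; rewrite /cprod /=; apply: cmul_zero_l => y; exact: Tc0.
  rewrite [X in _ + X]big1 ?addr0; last first.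
    move=> ts _; rewrite /cprod /=; apply: cmul_zero_r => y; apply: cmul_zero_l => z; exact: Tc0.
  rewrite sum_comps2; apply: eq_bigr => i _; rewrite /cprod /= cmul_inner.
  by rewrite /blockmask.
rewrite (@tuples_bitseqs _ n.-1 (fun I J => \sum_(i < S.+1) cmul (Tc psihat yhat 1 ((i:nat)%:Z - 1) I)
   (Tc psihat yhat 1 ((S - i)%N%:Z - 1) J) (x0::x'))).
rewrite [RHS]exchange_big; apply: eq_big_seq => I /bitseqs_size hI.
by rewrite /S sum_l2 // hI.
Qed.
End S.
Theorem lemma2p18 (K : fieldType) (charK : [pchar K] =i pred0)
  (psihat yhat : nat -> nat -> K)
  (psi0 : forall a : nat, psihat a 0%N = 0) (y0 : forall a : nat, yhat a 0%N = 0)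
  (g n : nat) (n_ge1 : (1 <= n)%N) (w : seq int) (hw : size w = n) :
  Phi psihat yhat (fun x => 2%:R * TTc psihat yhat n 2 ((2 * g)%:Z - 2 + n%:Z) x) w
  = Phi psihat yhat (RHSc psihat yhat g n) w.
Proof.
have h2 : (2%:R : K) != 0.
  by rewrite (proj1 (pcharf0P _) charK).
apply: Phi_ext; first by rewrite hw.
move=> x hx hinc; rewrite TTc2 main_pt // ?hx ?hw // mulrA mulfV ?mul1r //.
Qed.
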